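(* Let $q$ be an odd prime power, $d$ a positive integer, and $\varphi_d$ the coloring defined below. Let $\{s_1,\dots,s_t\} \subseteq (\mathbb{F}_q^* )^d$ be a set of $t$ linearly independent vectors and let $a,b \in (\mathbb{F}_q^* )^d$ (with $a\neq b$, $a\ne s_i$, $b\ne s_i$ for all $i$) be such that there are colors $\alpha,\beta\in C_d$ with $\varphi_d(a,b) = \varphi_d(a,s_i) = \alpha$ and $\varphi_d(b,s_i) = \beta$ for each $1 \le i \le t$. Then $s_1,\dots,s_t,b$ are linearly independent.
   Context: $\mathbb{F}_q^*$ is the set of nonzero elements of $\mathbb{F}_q$, endowed with an arbitrary fixed linear order; $(\mathbb{F}_q^* )^d$ is ordered lexicographically with respect to it. Let $C_d = \mathrm{DOT} \sqcup \mathrm{ZERO}\sqcup\mathrm{UP}\sqcup\mathrm{DOWN}$, where $\mathrm{DOT} = \mathbb{F}_q^*$ and ZERO, UP, DOWN are three disjoint copies of $\{1,\dots,d\}\times \mathbb{F}_q$. For distinct $x<y$ in $(\mathbb{F}_q^* )^d$, let $i$ be the first coordinate where $x=(x_1,\dots,x_d)$ and $y$ differ, and let $x\cdot y$ be the standard dot product; define $\varphi_d(x,y)=\varphi_d(y,x)$ to be $(i,x_i+y_i)$ in ZERO if $x\cdot y=0$; $(i,x_i+y_i)$ in UP if $x\cdot y\ne 0$ and $x\cdot y=x\cdot x$; $(i,x_i+y_i)$ in DOWN if $x\cdot y\notin\{0,x\cdot x\}$ and $x\cdot y=y\cdot y$; and $x\cdot y\in \mathrm{DOT}$ otherwise. 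*)

(* Defs.v *)
From HB Require Import structures.
From mathcomp Require Import all_boot all_order all_algebra all_field.
Set Implicit Arguments. Unset Strict Implicit. Unset Printing Implicit Defensive.
Import GRing.Theory.
Local Open Scope ring_scope.

Definition allnz (F : fieldType) (d : nat) (x : 'rV[F]_d) : bool :=
  [forall i : 'I_d, x 0 i != 0].

Definition dotv (F : fieldType) (d : nat) (x y : 'rV[F]_d) : F :=
  \sum_(i < d) x 0 i * y 0 i.

Definition strict_linear_order_on_units (F : fieldType) (lt : rel F) : Prop :=
  [/\ (forall x, x != 0 -> ~~ lt x x),
      (forall x y z, x != 0 -> y != 0 -> z != 0 -> lt x y -> lt y z -> lt x z)
    & (forall x y, x != 0 -> y != 0 -> x != y -> lt x y || lt y x)].

Inductive color (F : fieldType) (d : nat) : Type :=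
| DOT  of F
| ZERO of 'I_d & F
| UP   of 'I_d & F
| DOWN of 'I_d & F.

(* first coordinate where x and y differ (unique, hence pick is canonical) *)
Definition fdiff (F : finFieldType) (d : nat) (x y : 'rV[F]_d) : option 'I_d :=
  [pick i : 'I_d | (x 0 i != y 0 i) &&
                   [forall j : 'I_d, (j < i)%N ==> (x 0 j == y 0 j)]].

(* color of the pair x < y (lexicographically), i the first differing coord. *)
Definition phi0 (F : finFieldType) (d : nat) (x y : 'rV[F]_d) (i : 'I_d)
  : color F d :=
  let s := x 0 i + y 0 i in
  if dotv x y == 0 then ZERO i s
  else if dotv x y == dotv x x then UP i s
  else if dotv x y == dotv y y then DOWN i s
  else DOT d (dotv x y).

(* phi_d(x,y) = phi_d(y,x), defined for x <> y (default value otherwise) *)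
Definition phi (F : finFieldType) (lt : rel F) (d : nat) (x y : 'rV[F]_d)
  : color F d :=
  match fdiff x y with
  | Some i => if lt (x 0 i) (y 0 i) then phi0 x y i else phi0 y x i
  | None => DOT d 0
  end.

(* Main.v *)
Require Import Defs.
From HB Require Import structures.
From mathcomp Require Import all_boot all_order all_algebra all_field.
Local Open Scope ring_scope.
Import GRing.Theory.
Set Implicit Arguments. Unset Strict Implicit.

Section Aux.
Variables (F : finFieldType) (d : nat).

Definition info (x y : 'rV[F]_d) (c : color F d) : Prop :=
  match c with
  | DOT e => [/\ e != 0, dotv x y = e, e != dotv x x & e != dotv y y]
  | ZERO k t | UP k t | DOWN k t =>
      [/\ x 0 k + y 0 k = t, x 0 k != y 0 k &
          forall j : 'I_d, (j < k)%N -> x 0 j = y 0 j]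
  end.

Lemma dotvC (x y : 'rV[F]_d) : dotv x y = dotv y x.
Proof. by apply: eq_bigr => i _; rewrite mulrC. Qed.

Lemma info_sym (x y : 'rV[F]_d) c : info x y c -> info y x c.
Proof.
case: c => [e|k t|k t|k t] /=.
- by case=> h1 h2 h3 h4; split => //; rewrite dotvC.
- by case=> h1 h2 h3; split=> [||j /h3 ->] //; [rewrite addrC | rewrite eq_sym].
- by case=> h1 h2 h3; split=> [||j /h3 ->] //; [rewrite addrC | rewrite eq_sym].
- by case=> h1 h2 h3; split=> [||j /h3 ->] //; [rewrite addrC | rewrite eq_sym].
Qed.

Lemma info_phi0 (x y : 'rV[F]_d) (k : 'I_d) : x 0 k != y 0 k ->
  (forall j : 'I_d, (j < k)%N -> x 0 j = y 0 j) -> info x y (phi0 x y k).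
Proof.
move=> hk hj; rewrite /phi0.
case: eqP => [h0|/eqP h0]; first by split.
case: eqP => [h1|/eqP h1]; first by split.
case: eqP => [h2|/eqP h2]; first by split.
by split => //; rewrite eq_sym.
Qed.

Lemma fdiff_none (x y : 'rV[F]_d) : fdiff x y = None -> x = y.
Proof.
rewrite /fdiff; case: pickP => // H _.
have key : forall n (i : 'I_d), (i < n)%N -> x 0 i = y 0 i.
  elim=> // n IH i lin; apply/eqP; apply/negPn/negP => ne.
  move: (H i); rewrite ne /=; move/negbT/negP; apply.
  by apply/forallP => j; apply/implyP => ji; rewrite IH // (leq_trans ji).
by apply/rowP => i; exact: (key d i (ltn_ord i)).
Qed.

Lemma info_phi lt (x y : 'rV[F]_d) : x != y -> info x y (phi lt x y).
Proof.
move=> nxy; rewrite /phi; case E: (fdiff x y) => [k|]; last first.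
  by move: nxy; rewrite (fdiff_none E) eqxx.
move: E; rewrite /fdiff; case: pickP => // k' /andP[hk /forallP hj] [<-].
have hj' : forall j : 'I_d, (j < k')%N -> x 0 j = y 0 j.
  by move=> j jl; apply/eqP; apply: (implyP (hj j)).
case: ifP => _; first exact: info_phi0.
apply: info_sym; apply: info_phi0; first by rewrite eq_sym.
by move=> j /hj' ->.
Qed.

Lemma lin_sum (f : 'rV[F]_d -> F) (Hadd : forall x y, f (x+y) = f x + f y)
  (Hsc : forall c x, f (c *: x) = c * f x) n (lam : 'I_n -> F)
  (v : 'I_n -> 'rV[F]_d) :
  f (\sum_i lam i *: v i) = \sum_i lam i * f (v i).
Proof.
have H0 : f 0 = 0 by rewrite -(scale0r 0) Hsc mul0r.
apply: (big_ind2 (fun x y => f x = y)) => //.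
  by move=> x1 x2 y1 y2 <- <-; rewrite Hadd.
Qed.

Lemma dot_add (z x y : 'rV[F]_d) : dotv z (x + y) = dotv z x + dotv z y.
Proof. by rewrite /dotv -big_split; apply: eq_bigr => i _; rewrite mxE mulrDr. Qed.

Lemma dot_sc (z : 'rV[F]_d) c (x : 'rV[F]_d) : dotv z (c *: x) = c * dotv z x.
Proof. by rewrite /dotv mulr_sumr; apply: eq_bigr => i _; rewrite mxE mulrCA. Qed.

End Aux.

Theorem lemma3p3 (F : finFieldType) (lt : rel F) (d : nat)
  (s : seq 'rV[F]_d) (a b : 'rV[F]_d) :
  odd #|F| ->
  (0 < d)%N ->
  strict_linear_order_on_units lt ->
  all (@allnz F d) s -> allnz a -> allnz b ->
  free s ->
  a != b -> a \notin s -> b \notin s ->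
  (exists alpha beta : color F d,
     phi lt a b = alpha /\
     (forall si, si \in s -> phi lt a si = alpha /\ phi lt b si = beta)) ->
  free (rcons s b).
Proof.
move=> _ d0 _ alls anza anzb fs nab nas nbs [al [be [hab hs]]].
have Pr : perm_eq (rcons s b) (b :: s) by rewrite perm_rcons.
rewrite (perm_free Pr) free_cons fs andbT.
apply/negP => bin.
have nzv : forall v : 'rV[F]_d, allnz v -> forall k, v 0 k != 0.
  by move=> v /forallP.
have ne : forall si, si \in s -> a != si /\ b != si.
  by move=> si sin; split; apply/eqP => E; [move: nas|move: nbs]; rewrite E sin.
have Hb := @coord_span _ _ _ (in_tuple s) b bin.
set lam := fun i : 'I_(size s) => coord (in_tuple s) i b.
have Hmem : forall i : 'I_(size s), (in_tuple s)`_i \in s.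
  by move=> i; apply: mem_nth.
have gen : forall (f : 'rV[F]_d -> F) e,
   (forall x y, f (x+y) = f x + f y) -> (forall c x, f (c *: x) = c * f x) ->
   (forall si, si \in s -> f si = e) -> f b = (\sum_i lam i) * e.
  move=> f e Ha Hc Hf; rewrite {1}Hb lin_sum // mulr_suml.
  by apply: eq_bigr => i _; rewrite Hf.
have coord_add : forall k, forall x y : 'rV[F]_d, (x + y) 0 k = x 0 k + y 0 k.
  by move=> k x y; rewrite mxE.
have coord_sc : forall k c (x : 'rV[F]_d), (c *: x) 0 k = c * x 0 k.
  by move=> k c x; rewrite mxE.
have Hsum : \sum_i lam i = 1.
  have Iab := info_phi lt nab; rewrite hab in Iab.
  have Ias : forall si, si \in s -> info a si al.
    by move=> si sin; have := info_phi lt (ne si sin).1; rewrite (hs si sin).1.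
  have fin : forall (f : 'rV[F]_d -> F) c, c != 0 -> f b = c ->
     (forall x y, f (x+y) = f x + f y) -> (forall c x, f (c *: x) = c * f x) ->
     (forall si, si \in s -> f si = c) -> \sum_i lam i = 1.
    move=> f c c0 fb Ha Hc Hf; have := gen f c Ha Hc Hf.
    by rewrite fb -{1}(mul1r c) => /(mulIf c0).
  move: Iab Ias; case: al {hab hs} => [e|k t|k t|k t] /=.
  - case=> e0 hd _ _ Ias; apply: (fin (dotv a) e e0 hd).
    + exact: dot_add. + exact: dot_sc.
    + by move=> si /Ias [].
  1-3: case=> h1 _ _ Ias; apply: (fin (fun v => v 0 k) (b 0 k) (nzv _ anzb k)) => //.
  1-3: by move=> si /Ias [h2 _ _]; apply: (addrI (a 0 k)); rewrite h1 h2.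
clear Pr; case: s alls fs nas nbs bin hs ne Hb lam Hmem gen Hsum => [|s0 s'] alls fs nas nbs bin hs ne Hb lam Hmem gen Hsum.
  by move: bin; rewrite span_nil memv0 => /eqP b0; move: (nzv _ anzb (Ordinal d0)); rewrite b0 mxE eqxx.
have s0in : s0 \in s0 :: s' by rewrite inE eqxx.
have Ib0 := info_phi lt (ne s0 s0in).2; rewrite (hs s0 s0in).2 in Ib0.
have Ibs : forall si, si \in s0 :: s' -> info b si be.
  by move=> si sin; have := info_phi lt (ne si sin).2; rewrite (hs si sin).2.
move: Ib0 Ibs; case: be {hs} => [e|k t|k t|k t] /=.
- case=> _ _ hbb _ Ibs.
  have := gen (dotv b) e (@dot_add _ _ b) (@dot_sc _ _ b) (fun si h => match Ibs si h with And4 _ x _ _ => x end).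
  rewrite Hsum mul1r => E; by move: hbb; rewrite E eqxx.
all: case=> h1 h2 _ Ibs.
all: have Hf : forall si, si \in s0 :: s' -> si 0 k = t - b 0 k by move=> si /Ibs [<- _ _]; rewrite addrAC subrr add0r.
all: have := gen (fun v => v 0 k) (t - b 0 k) (coord_add k) (@coord_sc k) Hf.
all: rewrite Hsum mul1r => E; by move: h2; rewrite (Hf s0 s0in) -E eqxx.
Qed.
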